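(* For every integer $n>1$ and every integer $k$ with $1\le k\le 2n$, $c_{2k,n}=2^{k+1}-1$.
   Context: Fix $n>1$. Let $Q_n=\{(1,n+1)\}\cup\{(m,2n+2-m):2\le m\le n\}\cup\{(m,2n+1-m):n+1\le m\le 2n\}$. For integers $1\le i,j\le 2n$ and $k\ge1$ define $b_{k,i,j,n}$ recursively by $b_{1,i,j,n}=1$ if $(i,j)\in Q_n$ and $0$ otherwise, and $b_{k+1,i,j,n}=b_{k,i,2n+1-j,n}+b_{k,i,n+1,n}$ if $1\le j\le n-1$; $b_{k+1,i,n,n}=b_{k,i,n,n}+b_{k,i,n+1,n}$; $b_{k+1,i,n+1,n}=b_{k,i,1,n}$; $b_{k+1,i,j,n}=b_{k,i,2n+2-j,n}$ if $n+2\le j\le 2n$. Define $c_{k,n}=\sum_{i=1}^{2n}b_{k,i,i,n}+b_{k,n+1,n,n}+\sum_{i=n+2}^{2n}b_{k,i,n+1,n}$. *)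

(* Defs.v *)
From mathcomp Require Import all_boot.
Set Implicit Arguments. Unset Strict Implicit. Unset Printing Implicit Defensive.

Definition inQ (n i j : nat) : bool :=
  [|| (i == 1) && (j == n.+1),
      [&& 2 <= i, i <= n & j == (2 * n + 2) - i]
    | [&& n.+1 <= i, i <= 2 * n & j == (2 * n + 1) - i]].

(* b k i j n ; the paper's index k >= 1.  b 0 is an unused dummy (0). *)
Fixpoint b (k i j n : nat) {struct k} : nat :=
  match k with
  | 0 => 0
  | 1 => if inQ n i j then 1 else 0
  | k'.+1 =>
      if (1 <= j) && (j <= n - 1) then b k' i (2 * n + 1 - j) n + b k' i n.+1 n
      else if j == n then b k' i n n + b k' i n.+1 n
      else if j == n.+1 then b k' i 1 n
      else if (n + 2 <= j) && (j <= 2 * n) then b k' i (2 * n + 2 - j) n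
      else 0
  end.

Definition c (k n : nat) : nat :=
  \sum_(1 <= i < (2 * n).+1) b k i i n + b k n.+1 n n
  + \sum_(n + 2 <= i < (2 * n).+1) b k i n.+1 n.

(* Main.v *)
Require Import Defs.
From mathcomp Require Import all_boot.
From Stdlib Require Import Lia.
Set Implicit Arguments. Unset Strict Implicit. Unset Printing Implicit Defensive.


Ltac natify := repeat match goal with
 | H : is_true (_ <= _) |- _ => move/leP: H => H
 | H : is_true (_ == _) |- _ => move/eqP: H => H
 | H : is_true (~~ (_ <= _)) |- _ => rewrite -ltnNge in H
 | H : is_true (~~ (_ == _)) |- _ => move/eqP: H => H
 | H : (_ == _) = false |- _ => move/negbT: H => H
 | H : (_ <= _) = false |- _ => move/negbT: H => H
 | H : (_ && _) = true |- _ => let H1 := fresh "H" in let H2 := fresh "H" in case/andP: H => H1 H2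
 | H : is_true (_ && _) |- _ => let H1 := fresh "H" in let H2 := fresh "H" in case/andP: H => H1 H2
 | |- is_true (_ && _) => apply/andP; split
 | |- is_true (_ <= _) => apply/leP
 | |- is_true (_ == _) => apply/eqP
 | |- is_true (~~ (_ == _)) => apply/eqP
 | |- (_ == _) = false => apply/negbTE
 | |- (_ <= _) = false => apply/negbTE; rewrite -ltnNge
 | |- (_ <= _) = true => apply/leP
 | |- (_ == _) = true => apply/eqP
 end.
Ltac lia' := natify; repeat rewrite <- mul2n in *; repeat rewrite <- subn1 in *; try rewrite <- plusE in *; try rewrite <- minusE in *; try rewrite <- multE in *; lia.

Ltac crush := repeat match goal with
 | |- context[if ?b then _ else _] => let H := fresh "H" in case: ifP => H
 | |- context[?a == ?b] => let H := fresh "H" in case: (a =P b) => H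
 end; simpl; try lia'.

Definition stepL (n : nat) (f : nat -> nat) (y : nat) : nat :=
  (if y.+1 < n.*2 then f y.+1 else 0) + (if odd y then f 0 else 0)
  + (if y == (n.*2).-1 then f y else 0).

Fixpoint P (n t x : nat) : nat -> nat :=
  match t with 0 => fun y => nat_of_bool (x == y) | t'.+1 => stepL n (P n t' x) end.

Lemma PS n t x y : P n t.+1 x y = stepL n (P n t x) y.
Proof. by []. Qed.

Lemma stepL_ext n f g y : (forall z, z < n.*2 -> f z = g z) -> y < n.*2 ->
  stepL n f y = stepL n g y.
Proof.
move=> E Hy; rewrite /stepL; have H0 : 0 < n.*2 by apply: leq_ltn_trans Hy.
by case: ifP => h1; rewrite ?E.

Qed.

Lemma stepL_add n f g y : stepL n (fun z => f z + g z) y = stepL n f y + stepL n g y.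
Proof.
rewrite /stepL; case: ifP => _; case: ifP => _; case: ifP => _;
  rewrite -?plusE; lia.
Qed.

Lemma FS1 n t x y : 0 < x -> x.+1 < n.*2 -> y < n.*2 -> P n t.+1 x y = P n t x.-1 y.
Proof.
move=> Hx1 Hx2; elim: t y => [|t IH] y Hy.
  rewrite PS /stepL /=.
  case: x Hx1 Hx2 => [//|x] _ Hx2 /=.
  case: ifP => h1; case: ifP => h2; case: ifP => h3;
    rewrite ?eqSS; try (case: eqP; case: eqP); lia'.
rewrite PS (@stepL_ext n (P n t.+1 x) (P n t x.-1)) //.
Qed.

Lemma FS2 n t y : 0 < n -> y < n.*2 ->
  P n t.+1 (n.*2).-1 y = P n t (n.*2).-2 y + P n t (n.*2).-1 y.
Proof.
move=> Hn; elim: t y => [|t IH] y Hy.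
  rewrite PS /stepL /=.
  crush.
rewrite PS (@stepL_ext n (P n t.+1 (n.*2).-1) (fun z => P n t (n.*2).-2 z + P n t (n.*2).-1 z)) //.
by rewrite stepL_add.
Qed.

Lemma Desc n m t x y : x + m < (n.*2).-1 -> y < n.*2 -> P n (t + m) (x + m) y = P n t x y.
Proof.
move=> H Hy; elim: m H => [|m IH] H; first by rewrite !addn0.
rewrite !addnS FS1 //=; first (apply: IH; lia'); lia'.
Qed.

Lemma D1 n t x y : x < (n.*2).-1 -> y < n.*2 -> x <= t -> P n t x y = P n (t - x) 0 y.
Proof.
move=> H Hy Ht; have := @Desc n x (t - x) 0 y; rewrite add0n subnK //; by apply.
Qed.

Lemma D2 n t x y : x < (n.*2).-1 -> y < n.*2 -> t <= x -> P n t x y = (x - t == y).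
Proof.
move=> H Hy Ht; have := @Desc n t 0 (x - t) y; rewrite add0n subnK //; move=> ->//.
Qed.

Definition g (s : nat) := 2 ^ ((s.-1)./2).

Lemma gS s : g s.+2 = 2 ^ (odd s) * g s.+1.
Proof. by rewrite /g /= uphalf_half expnD. Qed.

Lemma g3 s : g s.+3 = 2 * g s.+1.
Proof. by rewrite /g /= expnS. Qed.

Lemma oddNm1 n : 0 < n -> odd (n.*2).-1.
Proof. by case: n => // n _; rewrite doubleS /= odd_double. Qed.

Lemma Cl n s : 1 < n ->
 (forall y, y < n.*2 -> odd (s + y) -> s + y <= (n.*2).-1 -> P n s 0 y = 0) /\
 (forall y, y < n.*2 -> ~~ odd (s + y) -> s + y <= (n.*2).*2 ->
     P n s 0 y = if s == 0 then nat_of_bool (y == 0) else g s) /\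
 (0 < s <= (n.*2).+1 -> P n s 0 (n.*2).-1 = g s).
Proof.
move=> Hn; elim: s => [|s [IH1 [IH2 IH3]]].
  split; first by move=> [|y].
  by split=> // y; rewrite eq_sym.
have Hodd : odd (n.*2).-1 by apply: oddNm1; lia'.
have C1 : forall y, y < n.*2 -> odd (s.+1 + y) -> s.+1 + y <= (n.*2).-1 -> P n s.+1 0 y = 0.
  move=> y Hy Ho Hb; rewrite PS /stepL.
  have -> : y.+1 < n.*2 by lia'.
  have -> : (y == (n.*2).-1) = false by lia'.
  rewrite IH1 ?addnS //; last lia'.
  case Oy: (odd y); last by [].
  rewrite IH1 ?addn0 //; try lia'.
  by move: Ho; rewrite addSn /= oddD Oy; case: (odd s).
have C3 : 0 < s.+1 <= (n.*2).+1 -> P n s.+1 0 (n.*2).-1 = g s.+1.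
  move=> Hb; rewrite PS /stepL.
  have -> : ((n.*2).-1.+1 < n.*2) = false by lia'.
  rewrite Hodd eqxx add0n.
  clear C1; case: s IH1 IH2 IH3 Hb => [|s] IH1 IH2 IH3 Hb.
    by rewrite /=; crush.
  rewrite IH3; last lia'.
  rewrite gS.
  case Os: (odd s).
    rewrite IH2 //; [|lia'| by rewrite addn0 /= Os | lia'].
    by rewrite /= expn1 mul2n addnn.
  rewrite IH1 //; [|lia'| by rewrite addn0 /= Os |].
    by rewrite /= expn0 mul1n.
  have : s.+1 != n.*2.
    by apply/eqP => e; have := odd_double n; rewrite -e /= Os.
  move=> ?; lia'.
split; first exact: C1.
split; last exact: C3.
move=> y Hy Ho Hb; have -> : (s.+1 == 0) = false by [].
case Ey: (y == (n.*2).-1).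
  move/eqP: Ey => Ey; rewrite Ey; apply: C3; lia'.
rewrite PS /stepL Ey.
have -> : y.+1 < n.*2 by lia'.
rewrite addn0.
move: Ho; rewrite addSn /= oddD.
case Oy: (odd y); case Os: (odd s) => //= _.
  rewrite !IH2 ?addnS ?addn0 ?Os ?Oy //; try lia'; try by rewrite /= negbK oddD Oy Os.
  case: s Os {IH1 IH2 IH3 C1 C3 Hb} => [|s] Os //=.
  move: Os => /= /negbFE Os; rewrite gS Os.
  by rewrite mul2n addnn.
rewrite IH2 ?addnS ?addn0 //; try lia'; last by rewrite /= oddD Oy Os.
case: s Os {IH1 IH2 IH3 C1 C3 Hb} => [|s] Os //=.
move: Os => /= /negbTE Os; rewrite gS Os.
by rewrite mul1n.
Qed.

Ltac noif t := lazymatch t with context[if _ then _ else _] => fail | _ => idtac end.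
Ltac crush2 := repeat (match goal with
 | |- context[?a == ?b] => noif a; noif b; let H := fresh "H" in case: (a =P b) => H
 | |- context[?a <= ?b] => noif a; noif b; let H := fresh "H" in case: (leqP a b) => H
 | |- context[if ?b then _ else _] => let H := fresh "H" in case: ifP => H
 end; try (exfalso; lia')); simpl; try lia'.

Definition lev n j := if j <= n then (j.-1).*2.+1 else if j == n.+1 then 0 else (n.*2.+1 - j).*2.
Definition lq n i := if i == n.+1 then (n.*2).-1 else (lev n i).-1.

Lemma base_eq n i j : 1 < n -> 1 <= i <= 2 * n -> 1 <= j <= 2 * n ->
  (if inQ n i j then 1 else 0) = nat_of_bool (lq n i == lev n j).
Proof.
move=> Hn Hi Hj; rewrite /inQ /lq /lev; crush2.
Qed.

Lemma bS k i j n : b k.+2 i j n =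
      if (1 <= j) && (j <= n - 1) then b k.+1 i (2 * n + 1 - j) n + b k.+1 i n.+1 n
      else if j == n then b k.+1 i n n + b k.+1 i n.+1 n
      else if j == n.+1 then b k.+1 i 1 n
      else if (n + 2 <= j) && (j <= 2 * n) then b k.+1 i (2 * n + 2 - j) n
      else 0.
Proof. by []. Qed.

Lemma lev0 n : lev n n.+1 = 0.
Proof. by rewrite /lev ltnn eqxx. Qed.

Lemma SA n f j : 1 < n -> 1 <= j <= n - 1 ->
  stepL n f (lev n j) = f (lev n (2*n+1-j)) + f (lev n n.+1).
Proof.
move=> Hn Hj.
have E : lev n j = (j.-1).*2.+1 by rewrite /lev; crush2.
have -> : lev n (2*n+1-j) = (lev n j).+1 by rewrite E /lev; crush2.
rewrite lev0 /stepL E /= odd_double /=.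
have -> : (j.-1).*2.+2 < n.*2 by lia'.
have -> : ((j.-1).*2.+1 == (n.*2).-1) = false by lia'.
by rewrite addn0.
Qed.

Lemma SB n f : 1 < n -> stepL n f (lev n n) = f (lev n n) + f (lev n n.+1).
Proof.
move=> Hn.
have E : lev n n = (n.*2).-1 by rewrite /lev leqnn; lia'.
rewrite lev0 /stepL E oddNm1; last lia'.
have -> : ((n.*2).-1.+1 < n.*2) = false by lia'.
by rewrite eqxx add0n addnC.
Qed.

Lemma SC n f : 1 < n -> stepL n f (lev n n.+1) = f (lev n 1).
Proof.
move=> Hn.
have -> : lev n 1 = 1 by rewrite /lev; crush2.
rewrite lev0 /stepL /=.
have -> : 1 < n.*2 by lia'.
have -> : (0 == (n.*2).-1) = false by lia'.
by rewrite !addn0.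
Qed.

Lemma SD n f j : 1 < n -> n + 2 <= j <= 2 * n ->
  stepL n f (lev n j) = f (lev n (2*n+2-j)).
Proof.
move=> Hn Hj.
have E : lev n j = (n.*2.+1 - j).*2 by rewrite /lev; crush2.
have -> : lev n (2*n+2-j) = (lev n j).+1 by rewrite E /lev; crush2.
rewrite /stepL E /= odd_double /=.
have -> : (n.*2.+1 - j).*2.+1 < n.*2 by lia'.
have -> : ((n.*2.+1 - j).*2 == (n.*2).-1) = false by lia'.
by rewrite !addn0.
Qed.

Lemma bP n k i j : 1 < n -> 1 <= i <= 2 * n -> 1 <= j <= 2 * n ->
  b k.+1 i j n = P n k (lq n i) (lev n j).
Proof.
move=> Hn Hi; elim: k j => [|k IH] j Hj.
  exact: (base_eq Hn Hi Hj).
rewrite bS PS.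
case: ifP => h1.
  rewrite SA // !IH //; lia'.
case: ifP => h2.
  move/eqP: h2 => ->; rewrite SB // !IH //; lia'.
case: ifP => h3.
  move/eqP: h3 => ->; rewrite SC // !IH //; lia'.
case: ifP => h4; last by exfalso; move: h1 h2 h3 h4; crush2; try done; move=> *; lia'.
rewrite SD // !IH //; lia'.
Qed.

Lemma u_val n s : 1 < n -> 1 <= s <= n.*2 -> P n s 0 0 = if odd s then 0 else g s.
Proof.
move=> Hn Hs; have [C1 [C2 _]] := Cl s Hn.
case Os: (odd s).
  apply: C1; rewrite ?addn0 ?Os //; try lia'.
  have : s != n.*2 by apply/eqP => e; move: Os; rewrite e odd_double.
  move=> ?; lia'.
rewrite C2 ?addn0 ?Os //; try lia'.
by case: s Hs {Os C1 C2}.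
Qed.

Lemma top_val n s : 1 < n -> 1 <= s <= (n.*2).+1 -> P n s 0 (n.*2).-1 = g s.
Proof. move=> Hn Hs; have [_ [_ C3]] := Cl s Hn; exact: C3. Qed.

Lemma Ucomb s : 0 < s -> (if odd s then 0 else g s) + g s = g s.+1.
Proof.
case: s => // s _; rewrite gS /=; case: (odd s) => /=.
  by rewrite mul2n addnn.
by rewrite mul1n.
Qed.

Lemma Vlem n t : 1 < n -> t <= ((n.*2).*2).-1 ->
  P n t (n.*2).-1 0 = if t < (n.*2).-1 then 0 else g (t.+2 - n.*2).
Proof.
move=> Hn; elim: t => [|t IH] Ht.
  rewrite /=; crush2.
rewrite FS2; [|lia'|lia'].
rewrite IH; last lia'.
case: (leqP t (n.*2).-2) => h.
  rewrite D2; [|lia'|lia'|lia'].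
  case: (eqVneq t (n.*2).-2) => [->|ne].
    rewrite subnn eqxx.
    have -> : ((n.*2).-2 < (n.*2).-1) by lia'.
    have -> : ((n.*2).-2.+1 < (n.*2).-1) = false by lia'.
    by rewrite (_ : (n.*2).-2.+3 - n.*2 = 1) //; lia'.
  have -> : ((n.*2).-2 - t == 0) = false by lia'.
  have -> : (t < (n.*2).-1) by lia'.
  have -> : (t.+1 < (n.*2).-1) by lia'.
  by [].
rewrite D1; [|lia'|lia'|lia'].
have -> : (t < (n.*2).-1) = false by lia'.
have -> : (t.+1 < (n.*2).-1) = false by lia'.
rewrite u_val //; last lia'.
have -> : t.+2 - n.*2 = t - (n.*2).-2 by lia'.
have -> : t.+3 - n.*2 = (t - (n.*2).-2).+1 by lia'.
apply: Ucomb; lia'.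
Qed.

Lemma gsmall s : s <= 2 -> g s = 1.
Proof. by case: s => [|[|[|]]]. Qed.

Lemma Ylem n t : 1 < n -> t <= ((n.*2).*2).-1 ->
  P n t (n.*2).-1 (n.*2).-1 + 1 = g (t.+2 - n.*2) + g (t.+3 - n.*2).
Proof.
move=> Hn; elim: t => [|t IH] Ht.
  rewrite /= eqxx !gsmall //; lia'.
rewrite FS2; [|lia'|lia'].
rewrite -addnA IH; last lia'.
case: (leqP t (n.*2).-2) => h.
  rewrite D2; [|lia'|lia'|lia'].
  have -> : ((n.*2).-2 - t == (n.*2).-1) = false by lia'.
  rewrite !gsmall //; lia'.
rewrite D1; [|lia'|lia'|lia'].
rewrite top_val //; last lia'.
have -> : t.+2 - n.*2 = t - (n.*2).-2 by lia'.
have -> : t.+3 - n.*2 = (t - (n.*2).-2).+1 by lia'.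
have -> : t.+4 - n.*2 = (t - (n.*2).-2).+2 by lia'.
have : 0 < t - (n.*2).-2 by lia'.
case: (t - (n.*2).-2) => // s _.
by rewrite g3 addnA addnn -mul2n addnC.
Qed.

Lemma Aval n k l : 1 < n -> 1 <= k <= 2 * n -> 1 <= l <= (n.*2).-1 ->
  P n (k.*2).-1 l.-1 l = if l < k.*2 then g (k.*2 - l) else 0.
Proof.
move=> Hn Hk Hl; have [_ [C2 _]] := Cl (k.*2 - l) Hn.
case: (leqP l (k.*2)) => h.
  rewrite D1; [|lia'|lia'|lia'].
  have -> : (k.*2).-1 - l.-1 = k.*2 - l by lia'.
  rewrite C2; [|lia'|by rewrite subnK // odd_double|lia'].
  case: (eqVneq l (k.*2)) => [->|ne].
    rewrite subnn ltnn /=; have -> : (k.*2 == 0) = false by lia'.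
    by [].
  have -> : (k.*2 - l == 0) = false by lia'.
  have -> : l < k.*2 by lia'.
  by [].
rewrite D2; [|lia'|lia'|lia'].
have -> : (l.-1 - (k.*2).-1 == l) = false by lia'.
have -> : (l < k.*2) = false by lia'.
by [].
Qed.

Lemma Bval n k p : 1 < n -> 1 <= k <= 2 * n -> 1 <= p < n ->
  P n (k.*2).-1 (p.*2).-1 0 = if p < k then g ((k - p).*2) else nat_of_bool (p == k).
Proof.
move=> Hn Hk Hp; have [_ [C2 _]] := Cl ((k - p).*2) Hn.
case: (leqP p k) => h.
  rewrite D1; [|lia'|lia'|lia'].
  have -> : (k.*2).-1 - (p.*2).-1 = (k - p).*2 by lia'.
  rewrite C2; [|lia'|by rewrite addn0 odd_double|lia'].
  case: (eqVneq p k) => [->|ne].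
    by rewrite subnn ltnn.
  have -> : ((k - p).*2 == 0) = false by lia'.
  have -> : p < k by lia'.
  by [].
rewrite D2; [|lia'|lia'|lia'].
have -> : ((p.*2).-1 - (k.*2).-1 == 0) = false by lia'.
have -> : (p < k) = false by lia'.
have -> : (p == k) = false by lia'.
by [].
Qed.

Lemma gd1 d : g (d.*2.+1) = 2 ^ d.
Proof. by rewrite /g /= doubleK. Qed.
Lemma gd2 d : g ((d.+1).*2) = 2 ^ d.
Proof. by rewrite /g doubleS /= uphalf_double. Qed.

Lemma Gs k m : m <= k -> \sum_(1 <= i < m.+1) 2 ^ (k - i) + 2 ^ (k - m) = 2 ^ k.
Proof.
elim: m => [|m IH] H; first by rewrite big_geq // subn0.
rewrite big_nat_recr //= -addnA -IH; last lia'.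
congr (_ + _).
have -> : k - m = (k - m.+1).+1 by lia'.
by rewrite expnS mul2n addnn.
Qed.

Lemma revsum n (F : nat -> nat) :
  \sum_(n.+2 <= i < (2 * n).+1) F ((2 * n).+1 - i) = \sum_(1 <= p < n) F p.
Proof.
rewrite big_nat_rev.
rewrite (@eq_big_nat _ _ _ _ _ _ (fun i => F (i - n.+1))); last first.
  move=> i Hi; congr F; lia'.
rewrite (_ : n.+2 = 1 + n.+1) // big_addn.
rewrite (_ : (2 * n).+1 - n.+1 = n); last lia'.
by apply: eq_big_nat => i _; rewrite addnK.
Qed.

Lemma zsum m1 m2 (F : nat -> nat) : (forall i, m1 <= i < m2 -> F i = 0) -> \sum_(m1 <= i < m2) F i = 0.
Proof.
move=> H; rewrite (eq_big_nat _ _ (F2 := fun=> 0)) //.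
by rewrite sum_nat_const_nat muln0.
Qed.

Lemma VS1 n k : 0 < k -> \sum_(1 <= i < n.+1) (if i <= k then 2 ^ (k - i) else 0)
   + (if k <= n then 1 else 2 ^ (k - n)) = 2 ^ k.
Proof.
move=> Hk; case: (leqP k n) => h.
  rewrite (@big_cat_nat _ _ _ k.+1) //=; try lia'.
  rewrite (@zsum k.+1); last by move=> i Hi; have -> : (i <= k) = false by lia'.
  rewrite addn0 -(@Gs k k) // subnn.
  congr (_ + _); apply: eq_big_nat => i Hi; have -> : i <= k by lia'.
  by [].
rewrite -(@Gs k n); last lia'.
congr (_ + _); apply: eq_big_nat => i Hi; have -> : i <= k by lia'.
by [].
Qed.

Lemma VS3a n k : 0 < k -> k < n ->
  \sum_(1 <= p < n) (if p < k then 2 ^ (k - p) else nat_of_bool (p == k)) + 1 = 2 ^ k.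
Proof.
move=> Hk h.
rewrite (@big_cat_nat _ _ _ k) //=; try lia'.
rewrite (@big_ltn _ _ _ k n) // ltnn eqxx (@zsum k.+1); last first.
  move=> i Hi; case: ifP => h1; [lia' | ]; case: eqP => // e; lia'.
have := (@Gs k k.-1); rewrite prednK //; move=> <-; last lia'.
rewrite (_ : k - k.-1 = 1); last lia'.
rewrite addn0 -addnA; congr (_ + _).
apply: eq_big_nat => i Hi; have -> : i < k by lia'.
by [].
Qed.

Lemma VS3b n k : 1 < n -> n <= k ->
  \sum_(1 <= p < n) (if p < k then 2 ^ (k - p) else nat_of_bool (p == k)) + 2 * 2 ^ (k - n) = 2 ^ k.
Proof.
move=> Hn h.
have := (@Gs k n.-1); rewrite prednK; last lia'.
move=> <-; last lia'.
rewrite (_ : k - n.-1 = (k - n).+1); last lia'.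
rewrite expnS; congr (_ + _).
apply: eq_big_nat => i Hi; have -> : i < k by lia'.
by [].
Qed.

Theorem mainTheorem5 (n k : nat) :
  1 < n -> 1 <= k <= 2 * n -> c (2 * k) n = 2 ^ k.+1 - 1.
Proof.
move=> Hn Hk.
have Et : 2 * k = (k.*2).-1.+1 by rewrite mul2n prednK //; lia'.
rewrite /c Et.
rewrite (@big_cat_nat _ _ _ n.+1); [|lia'|lia'].
rewrite (@big_cat_nat _ _ _ n.+2 n.+1); [|lia'|lia'].
rewrite big_nat1.
have S1 : \sum_(1 <= i < n.+1) b (k.*2).-1.+1 i i n
          = \sum_(1 <= i < n.+1) (if i <= k then 2 ^ (k - i) else 0).
  apply: eq_big_nat => i Hi; rewrite bP //; [|lia'|lia'].
  rewrite /lq /lev.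
  have -> : (i == n.+1) = false by lia'.
  have -> : (i <= n) by lia'.
  rewrite Aval //; last lia'.
  case: (leqP i k) => h.
    have -> : (i.-1).*2.+1 < k.*2 by lia'.
    by rewrite (_ : k.*2 - (i.-1).*2.+1 = (k - i).*2.+1) ?gd1 //; lia'.
  have -> : ((i.-1).*2.+1 < k.*2) = false by lia'.
  by [].
have SX : b (k.*2).-1.+1 n.+1 n.+1 n = if (k.*2).-1 < (n.*2).-1 then 0 else g ((k.*2).-1.+2 - n.*2).
  rewrite bP //; [|lia'|lia'].
  rewrite /lq eqxx lev0 Vlem //; lia'.
have SY : b (k.*2).-1.+1 n.+1 n n + 1 = g ((k.*2).-1.+2 - n.*2) + g ((k.*2).-1.+3 - n.*2).
  rewrite bP //; [|lia'|lia'].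
  rewrite /lq eqxx (_ : lev n n = (n.*2).-1); last by rewrite /lev leqnn; lia'.
  rewrite Ylem //; lia'.
have S3 : \sum_(n.+2 <= i < (2 * n).+1) b (k.*2).-1.+1 i i n
        + \sum_(n.+2 <= i < (2 * n).+1) b (k.*2).-1.+1 i n.+1 n
        = \sum_(1 <= p < n) (if p < k then 2 ^ (k - p) else nat_of_bool (p == k)).
  rewrite -big_split -revsum.
  apply: eq_big_nat => i Hi; rewrite !bP //; try lia'.
  rewrite /lq lev0 /lev.
  have -> : (i == n.+1) = false by lia'.
  have -> : (i <= n) = false by lia'.
  have -> : (n.*2.+1 - i) = (2 * n).+1 - i by lia'.
  set p := (2 * n).+1 - i.
  have Hp : 1 <= p < n by rewrite /p; lia'.
  rewrite Aval //; last lia'.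
  rewrite Bval //.
  case: (ltnP p k) => h.
    have -> : p.*2 < k.*2 by lia'.
    rewrite (_ : k.*2 - p.*2 = (k - p).*2); last lia'.
    rewrite (_ : k - p = (k - p).-1.+1); last lia'.
    rewrite gd2 /= addnn -mul2n -expnS.
    by [].
  have -> : (p.*2 < k.*2) = false by lia'.
  by [].
rewrite (_ : n + 2 = n.+2); last by rewrite addn2.
transitivity ((\sum_(1 <= i < n.+1) b (k.*2).-1.+1 i i n) + b (k.*2).-1.+1 n.+1 n.+1 n
   + (\sum_(n.+2 <= i < (2 * n).+1) b (k.*2).-1.+1 i i n
   + \sum_(n.+2 <= i < (2 * n).+1) b (k.*2).-1.+1 i n.+1 n) + b (k.*2).-1.+1 n.+1 n n).
  rewrite /=; lia'.
rewrite S1 S3 SX.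
have Hk0 : 0 < k by lia'.
have V1 := @VS1 n k Hk0.
rewrite expnS.
case: (ltnP k n) => h.
  have V3 := @VS3a n k Hk0 h.
  have -> : (k.*2).-1 < (n.*2).-1 by lia'.
  rewrite (_ : (k.*2).-1.+2 - n.*2 = 0) in SY; last lia'.
  rewrite (_ : (k.*2).-1.+3 - n.*2 = 0) in SY; last lia'.
  rewrite (_ : k <= n) in V1; last lia'.
  rewrite !gsmall // in SY.
  lia'.
have V3 := @VS3b n k Hn h.
have -> : (k.*2).-1 < (n.*2).-1 = false by lia'.
rewrite (_ : (k.*2).-1.+2 - n.*2 = (k - n).*2.+1) in SY *; last lia'.
rewrite (_ : (k.*2).-1.+3 - n.*2 = (k - n).+1.*2) in SY; last lia'.
rewrite gd1 gd2 in SY *.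
have V1' : \sum_(1 <= i < n.+1) (if i <= k then 2 ^ (k - i) else 0) + 2 ^ (k - n) = 2 ^ k.
  case: (eqVneq k n) => [e|ne].
    by move: V1; rewrite e leqnn subnn.
  by move: V1; rewrite (_ : (k <= n) = false) //; lia'.
lia'.
Qed.
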